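(* Let $E$ be a nonzero real Banach space, $K$ be a nonempty $w(E,E^* )$-compact convex subset of $E$ and $\mathbb I_K$ its indicator function. (a) If $y^{**}\in(\partial\mathbb I_K)^{\mathbb F}(y^* )$ then $y^{**}\in\widehat K$ and $\langle y^*,y^{**}\rangle=\sup_{x\in K}\langle x,y^*\rangle$. (b) $R((\partial\mathbb I_K)^{\mathbb F})\subset\widehat K\subset\widehat E$.
   Context: $\widehat x\in E^{**}$ is the canonical image of $x\in E$; $\widehat K=\{\widehat x:x\in K\}$, $\widehat E=\{\widehat x:x\in E\}$; $\mathbb I_K=0$ on $K$ and $\infty$ elsewhere. For proper convex lsc $f$, $x^*\in\partial f(x)$ iff $f(x)+f^*(x^* )=\langle x,x^*\rangle$; $\partial\mathbb I_K$ is closed, monotone and quasidense. For a multifunction $S\colon E\rightrightarrows E^*$ with nonempty graph: closed means $G(S)$ norm-closed; monotone means $\langle s-t,s^*-t^*\rangle\ge0$ on $G(S)$; quasidense means for every $(x,x^* )$, $\inf_{(s,s^* )\in G(S)}[\tfrac12\|s-x\|^2+\tfrac12\|s^*-x^*\|^2+\langle s-x,s^*-x^*\rangle]\le0$. Let $\varphi_S(x,x^* )=\sup_{(s,s^* )\in G(S)}[\langle s,x^*\rangle+\langle x,s^*\rangle-\langle s,s^*\rangle]$ and $\varphi_S^*$ its conjugate on $E^*\times E^{**}$ under $\langle (x,x^* ),(y^*,y^{**})\rangle=\langle x,y^*\rangle+\langle x^*,y^{**}\rangle$. For $S$ closed, monotone, quasidense, $S^{\mathbb F}\colon E^*\rightrightarrows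 E^{**}$ is given by $(y^*,y^{**})\in G(S^{\mathbb F})$ iff $\varphi_S^*(y^*,y^{**})=\langle y^*,y^{**}\rangle$; $R(\cdot)$ denotes range. *)

(* Defs.v *)
From HB Require Import structures.
From mathcomp Require Import all_boot all_order all_algebra.
From mathcomp Require Import all_classical all_reals all_analysis.
Set Implicit Arguments. Unset Strict Implicit. Unset Printing Implicit Defensive.
Import Order.TTheory GRing.Theory Num.Theory.
Import numFieldNormedType.Exports.
Local Open Scope classical_set_scope.
Local Open Scope ring_scope.

Section Banach.
Context {R : realType} {E : normedModType R}.

Definition is_dual (f : E -> R) : Prop :=
  (forall (a : R) (x y : E), f (a *: x + y) = a * f x + f y) /\ continuous f.

Definition dual := {f : E -> R | is_dual f}.
Definition dapp (f : dual) : E -> R := proj1_sig f.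

Definition dnorm (f : dual) : R := sup [set `|dapp f x| | x in [set x : E | `|x| <= 1]].

Definition is_bidual (phi : dual -> R) : Prop :=
  (forall (a : R) (f g h : dual),
      (forall x, dapp h x = a * dapp f x + dapp g x) -> phi h = a * phi f + phi g)
  /\ exists M : R, forall f : dual, `|phi f| <= M * dnorm f.

Definition hat (x : E) : dual -> R := fun f => dapp f x.
Definition Khat (K : set E) : set (dual -> R) := [set hat x | x in K].
Definition Ehat : set (dual -> R) := [set hat x | x in [set: E]].

Definition weakE : topologicalType :=
  sup_topology (fun f : dual => Topological.on (initial_topology (dapp f))).

Definition indicator_ext (K : set E) : E -> \bar R :=
  fun x => if `[< K x >] then 0%E else +oo%E.

Definition subdiff (f : E -> \bar R) : E -> dual -> Prop :=
  fun x xs => f x \is a fin_num /\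
    forall y, (f x + (dapp xs (y - x))%:E <= f y)%E.

(* multifunctions S : E ⇉ E^*  are given by their graphs *)
Definition phi_S (S : E -> dual -> Prop) (x : E) (xs : dual) : \bar R :=
  ereal_sup [set z | exists (s : E) (ss : dual),
              S s ss /\ z = (dapp xs s + dapp ss x - dapp ss s)%:E].

Definition phi_S_star (S : E -> dual -> Prop) (ys : dual) (yss : dual -> R) : \bar R :=
  ereal_sup [set z | exists (x : E) (xs : dual),
              z = ((dapp ys x + yss xs)%:E - phi_S S x xs)%E].

Definition SF (S : E -> dual -> Prop) : dual -> (dual -> R) -> Prop :=
  fun ys yss => is_bidual yss /\ phi_S_star S ys yss = (yss ys)%:E.

Definition range_SF (S : E -> dual -> Prop) : set (dual -> R) :=
  [set yss | exists ys, SF S ys yss].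

End Banach.
Arguments dual {R} E.
Arguments weakE {R} E.
Arguments Ehat {R} E.

(* Main.v *)
Require Import Defs.
From HB Require Import structures.
From mathcomp Require Import all_boot all_order all_algebra.
From mathcomp Require Import all_classical all_reals all_analysis.
From mathcomp Require Import ring lra.
Import Order.TTheory GRing.Theory Num.Theory.
Import numFieldNormedType.Exports.
Local Open Scope classical_set_scope.
Local Open Scope ring_scope.
Local Open Scope convex_scope.

Section S.
Context {R : realType} {E : normedModType R}.

Lemma dapp_cont (f : dual E) : continuous (dapp f : weakE E -> R).
Proof.
move=> x.
have h := (@cvg_sup E (dual E) (fun f => Topological.on (initial_topology (dapp f))) (nbhs (x : weakE E)) x _).1 (@cvg_id _ _) f.
move=> U HU; apply: h.
exact: (@initial_continuous E R (dapp f) x U HU).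
Qed.

Lemma dapp_lin (f : dual E) a x y : dapp f (a *: x + y) = a * dapp f x + dapp f y.
Proof. by have [H _] := proj2_sig f; apply: H. Qed.

Lemma dappB (f : dual E) x y : dapp f (x - y) = dapp f x - dapp f y.
Proof. by rewrite addrC -scaleN1r dapp_lin mulN1r addrC. Qed.

Lemma dapp0 (f : dual E) : dapp f 0 = 0.
Proof. have := dapp_lin f 1 0 0; rewrite scale1r addr0 mul1r => H.
by apply: (addrI (dapp f 0)); rewrite addr0 -H. Qed.

Definition dlin_fun (a : R) (f g : dual E) : E -> R := fun x => a * dapp f x + dapp g x.

Lemma dlin_is_dual a f g : is_dual (dlin_fun a f g).
Proof.
split.
  move=> b x y; rewrite /dlin_fun !dapp_lin; ring.
move=> x; rewrite /dlin_fun.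
apply: cvgD; last exact: (proj2 (proj2_sig g)).
apply: cvgM; first exact: cvg_cst.
exact: (proj2 (proj2_sig f)).
Qed.

Definition dlin a f g : dual E := exist _ (dlin_fun a f g) (dlin_is_dual a f g).

Lemma dzero_is_dual : is_dual (fun _ : E => (0:R)).
Proof. split; first by move=> *; rewrite mulr0 addr0. exact: cst_continuous. Qed.

Definition dzero : dual E := exist _ _ dzero_is_dual.

Definition DT := {classic (dual E)}.

Definition comb (s : seq (R * DT)) : dual E :=
  foldr (fun p acc => dlin p.1 p.2 acc) dzero s.

Lemma dapp_comb s x : dapp (comb s) x = \sum_(p <- s) p.1 * dapp p.2 x.
Proof. elim: s => [|p s IH]; first by rewrite big_nil. by rewrite big_cons -IH. Qed.

Section Bid.
Variable yss : dual E -> R.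
Hypothesis Hb : is_bidual yss.

Lemma bid_lin a f g : yss (dlin a f g) = a * yss f + yss g.
Proof. by apply: (proj1 Hb). Qed.

Lemma bid0 : yss dzero = 0.
Proof.
have H : yss dzero = 1 * yss dzero + yss dzero.
  by apply: (proj1 Hb) => x /=; rewrite mulr0 addr0.
move: H; rewrite mul1r; lra.
Qed.

Lemma bid_comb s : yss (comb s) = \sum_(p <- s) p.1 * yss p.2.
Proof. elim: s => [|p s IH]; first by rewrite big_nil bid0. by rewrite big_cons -IH /= bid_lin. Qed.
End Bid.

Lemma sum_cont (s : seq DT) (h : DT -> E -> R) :
  (forall f, continuous (h f : weakE E -> R)) ->
  continuous (fun x : weakE E => \sum_(f <- s) h f x).
Proof.
move=> hc; elim: s => [|f s IH].
  have -> : (fun x : weakE E => \sum_(f <- [::]) h f x) = fun=> 0.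
    by apply: funext => y; rewrite big_nil.
  exact: cst_continuous.
have -> : (fun x : weakE E => \sum_(i <- f :: s) h i x) = (fun x => h f x + \sum_(i <- s) h i x).
  by apply: funext => y; rewrite big_cons.
move=> x; exact: (@continuousD R R^o (weakE E) (h f) (fun x => \sum_(i<-s) h i x) x (hc f x) (IH x)).
Qed.

Lemma fin_dim (K : set E) (yss : dual E -> R) (Hb : is_bidual yss)
 (Hub : forall f M, (forall x, K x -> dapp f x <= M) -> yss f <= M)
 (K0 : K !=set0) (Kc : convex_set (K : set (convex_lmodType E)))
 (Kcomp : @compact (weakE E) K) (s : seq DT) :
 exists2 x, K x & forall f, f \in s -> dapp f x = yss f.
Proof.
pose g (x : weakE E) := \sum_(f <- s) (yss f - dapp f x) ^+ 2.
have gc : {within (K : set (weakE E)), continuous g}.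
  apply: continuous_subspaceT; rewrite /g.
  have HH := (@sum_cont s (fun f x => (yss f - dapp f x) ^+ 2)).
  apply: HH => f.
  have -> : (fun x : weakE E => (yss f - dapp f x) ^+ 2) = (fun x => (yss f - dapp f x) * (yss f - dapp f x)).
    by apply: funext => y; rewrite expr2.
  have hc : continuous (fun x : weakE E => yss f - dapp f x).
    move=> x; exact: (@cvgB R R^o _ _ (nbhs_filter (x : weakE E)) (fun=> yss f) (dapp f) _ _ (cvg_cst _) (dapp_cont f x)).
  move=> x; exact: (@cvgM R _ _ (nbhs_filter (x : weakE E)) _ _ _ _ (hc x) (hc x)).
have [x0 /set_mem Kx0 x0min] := @compact_EVT_min (weakE E) R g K K0 Kcomp gc.
pose lam (f : DT) := yss f - dapp f x0.
have var : forall y, K y -> \sum_(f <- s) lam f * (dapp f y - dapp f x0) <= 0.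
  move=> y Ky.
  set a := \sum_(f <- s) _.
  pose b := \sum_(f <- s) (dapp f y - dapp f x0) ^+ 2.
  have b0 : 0 <= b by apply: sumr_ge0 => f _; exact: sqr_ge0.
  have key : forall t (t0 : 0 <= t) (t1 : t <= 1), 0 <= t ^+ 2 * b - 2 * t * a.
    move=> t t0 t1.
    pose xt : convex_lmodType E := (y : convex_lmodType E) <| Itv01 t0 t1 |> (x0 : convex_lmodType E).
    have Kxt : K xt by apply: set_mem; apply: Kc; apply: mem_set.
    have dxt f : dapp f xt = dapp f x0 + t * (dapp f y - dapp f x0).
      rewrite /xt /conv /= dapp_lin.
      rewrite -[_ *: x0]addr0 dapp_lin dapp0 addr0 /unstable.onem; ring.
    have := x0min xt (mem_set Kxt).
    rewrite -subr_ge0 /g -sumrB.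
    have -> : t ^+ 2 * b - 2 * t * a = \sum_(f <- s) (t ^+ 2 * (dapp f y - dapp f x0) ^+ 2 - 2 * t * (lam f * (dapp f y - dapp f x0))).
      by rewrite sumrB -!mulr_sumr.
    congr (0 <= _); apply: eq_bigr => f _; rewrite dxt /lam; ring.
  rewrite leNgt; apply/negP => a0.
  have ab0 : 0 < a + b by lra.
  pose t := a / (a + b).
  have t0 : 0 < t by apply: divr_gt0.
  have t1 : t <= 1 by rewrite ler_pdivrMr // mul1r; lra.
  have tab : t * (a + b) = a by rewrite /t divfK // gt_eqF.
  have := key t (ltW t0) t1.
  nra.
pose cs := [seq (lam f, f) | f <- s].
have Hc : yss (comb cs) <= \sum_(f <- s) lam f * dapp f x0.
  apply: Hub => y Ky.
  rewrite dapp_comb big_map /= -subr_le0.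
  have -> : \sum_(f <- s) lam f * dapp f y - \sum_(f <- s) lam f * dapp f x0 = \sum_(f <- s) lam f * (dapp f y - dapp f x0).
    by rewrite -sumrB; apply: eq_bigr => f _; ring.
  exact: var.
rewrite bid_comb // big_map /= in Hc.
have Hs : \sum_(f <- s) lam f ^+ 2 == 0.
  rewrite eq_le sumr_ge0 ?andbT; last by move=> f _; exact: sqr_ge0.
  rewrite -subr_ge0 in Hc.
  have -> : \sum_(f <- s) lam f ^+ 2 = - (\sum_(f <- s) lam f * dapp f x0 - \sum_(f <- s) lam f * yss f).
    by rewrite opprB -sumrB; apply: eq_bigr => f _; rewrite /lam; ring.
  by rewrite oppr_le0.
rewrite psumr_eq0 in Hs; last by move=> f _; exact: sqr_ge0.
exists x0 => // f fs.
move/allP: Hs => /(_ f fs) /=; rewrite sqrf_eq0 /lam subr_eq0 => /eqP ->. done.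
Qed.

Lemma G_prop (K : set E) s ss : subdiff (indicator_ext K) s ss ->
  K s /\ forall y, K y -> dapp ss (y - s) <= 0.
Proof.
move=> [fin H].
have Ks : K s.
  by move: fin; rewrite /indicator_ext; case: asboolP.
split => // y Ky; have := H y; rewrite /indicator_ext.
by rewrite (asboolT Ky) (asboolT Ks) add0e lee_fin.
Qed.

Lemma phi_le (K : set E) x xs c :
  (forall s ss, subdiff (indicator_ext K) s ss -> dapp xs s + dapp ss x - dapp ss s <= c) ->
  (phi_S (subdiff (indicator_ext K)) x xs <= c%:E)%E.
Proof. move=> H; apply: ge_ereal_sup => z [s [ss [Hs ->]]]; rewrite lee_fin; exact: H. Qed.

Lemma SF_ge (S : E -> dual E -> Prop) ys yss x xs c :
  SF S ys yss -> (phi_S S x xs <= c%:E)%E -> dapp ys x + yss xs - c <= yss ys.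
Proof.
move=> [_ HS] Hc.
have H1 : ((dapp ys x + yss xs)%:E - phi_S S x xs <= phi_S_star S ys yss)%E.
  by apply: ereal_sup_ubound; exists x, xs.
rewrite HS in H1.
have H2 : ((dapp ys x + yss xs)%:E - c%:E <= (dapp ys x + yss xs)%:E - phi_S S x xs)%E.
  by apply: leeB.
by have := le_trans H2 H1; rewrite -EFinB lee_fin.
Qed.

Lemma SF_ub (K : set E) ys yss : SF (subdiff (indicator_ext K)) ys yss ->
  forall x, K x -> dapp ys x <= yss ys.
Proof.
move=> HS x Kx.
have := @SF_ge _ ys yss x dzero 0 HS.
rewrite (@bid0 yss (proj1 HS)) addr0 subr0; apply.
apply: phi_le => s ss /G_prop [Ks Hs] /=.
by rewrite add0r -dappB; exact: Hs.
Qed.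

Lemma SF_bound (K : set E) ys yss : SF (subdiff (indicator_ext K)) ys yss ->
  K !=set0 -> forall f M, (forall x, K x -> dapp f x <= M) -> yss f <= M.
Proof.
move=> HS [x0 Kx0] f M HM.
rewrite leNgt; apply/negP => dM.
have Ht : forall t, 0 <= t -> dapp ys x0 + t * yss f - t * M <= yss ys.
  move=> t t0.
  have := @SF_ge _ ys yss x0 (dlin t f dzero) (t * M) HS.
  rewrite (@bid_lin yss (proj1 HS)) (@bid0 yss (proj1 HS)) addr0.
  apply.
  apply: phi_le => s ss /G_prop [Ks Hs] /=.
  rewrite /dlin_fun /= addr0 -addrA -dappB.
  have := Hs _ Kx0; have := HM _ Ks => h1 h2.
  have : t * dapp f s <= t * M by apply: ler_wpM2l.
  lra.
set C := yss ys - dapp ys x0.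
set d := yss f - M.
have d0 : 0 < d by rewrite /d subr_gt0.
pose t := (`|C| + 1) / d.
have t0 : 0 <= t.
  apply: divr_ge0; last exact: ltW.
  by rewrite addr_ge0.
have td : t * d = `|C| + 1 by rewrite /t divfK // gt_eqF.
have := Ht t t0.
have : C <= `|C| := ler_norm C.
rewrite /d in td; rewrite /C.
nra.
Qed.

End S.

Theorem lemma3p5 (R : realType) (E : completeNormedModType R) (K : set E) :
  (exists x : E, x != 0) ->
  K !=set0 ->
  convex_set (K : set (convex_lmodType E)) ->
  @compact (weakE E) K ->
  (forall (ys : dual E) (yss : dual E -> R),
      SF (subdiff (indicator_ext K)) ys yss ->
      Khat K yss /\ yss ys = sup [set dapp ys x | x in K]) /\
  (range_SF (subdiff (indicator_ext K)) `<=` Khat K /\ Khat K `<=` Ehat E).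
Proof.
move=> _ K0 Kc Kcomp.
have partA : forall (ys : dual E) (yss : dual E -> R),
      SF (subdiff (indicator_ext K)) ys yss ->
      Khat K yss /\ yss ys = sup [set dapp ys x | x in K].
  move=> ys yss HS.
  have Hb := proj1 HS.
  have Hub := @SF_bound _ _ K ys yss HS K0.
  have [x1 Kx1 Hx1] : exists2 x1, K x1 & forall f, dapp f x1 = yss f.
    apply: contrapT => Hn.
    have cov : K `<=` cover [set: @DT R E] (fun f : DT => dapp f @^-1` [set r | r != yss f]).
      move=> x Kx; apply: contrapT => Hx; apply: Hn; exists x => // f.
      apply: contrapT => Hf; apply: Hx; exists f => //=; exact/eqP.
    have Kcov := Kcomp; rewrite compact_cover in Kcov.
    have [D' _ HD'] := Kcov (@DT R E) setT (fun f : DT => dapp f @^-1` [set r | r != yss f])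
      (fun f _ => proj1 (continuousP _) (dapp_cont f) _ (@open_neq R (yss f))) cov.
    have [x Kx Hx] := @fin_dim _ _ K yss Hb Hub K0 Kc Kcomp (finmap.enum_fset D').
    have [f Df /= Uf] := HD' x Kx.
    by move: Uf; rewrite Hx ?eqxx.
  split.
    exists x1 => //; apply: funext => f; rewrite /hat; exact: Hx1.
  apply: le_anti; apply/andP; split.
    have hub : has_ubound [set dapp ys x | x in K].
      by exists (yss ys) => _ [x Kx <-]; exact: (@SF_ub _ _ K ys yss HS x Kx).
    apply: (ub_le_sup hub).
    by exists x1 => //; rewrite Hx1.
  apply: ge_sup; first by have [x Kx] := K0; exists (dapp ys x), x.
  by move=> _ [x Kx <-]; exact: (@SF_ub _ _ K ys yss HS x Kx).
split => //; split.
  by move=> yss [ys HS]; exact: (proj1 (partA ys yss HS)).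
by move=> _ [x Kx <-]; exists x.
Qed.
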